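(* Let $0<|a|<M$ and let $(x,\xi)\in\Gamma^+\cup\Gamma^-$. If $\xi\cdot\partial_t>0$ or $\xi\cdot v_{\mathcal H}>0$, then $\xi$ is future pointing.
   Context: ${\rm M}_{\rm I}=\mathbb R_t\times(r_+,\infty)_r\times\mathbb S^2_{\theta,\varphi}$ is the Kerr exterior in Boyer–Lindquist coordinates with $r_+=M+\sqrt{M^2-a^2}$, $\Delta=r^2-2Mr+a^2$, $\rho^2=r^2+a^2\cos^2\theta$, $\sigma^2=(r^2+a^2)^2-a^2\Delta\sin^2\theta$, metric $g=-(1-\tfrac{2Mr}{\rho^2})dt^2-\tfrac{4aMr\sin^2\theta}{\rho^2}dt\,d\varphi+\tfrac{\rho^2}{\Delta}dr^2+\rho^2d\theta^2+\tfrac{\sigma^2}{\rho^2}\sin^2\theta\,d\varphi^2$, time-oriented by declaring $-\nabla t$ future directed; $\xi$ is future pointing if $v\cdot\xi>0$ for all future directed timelike $v$. Covectors $\xi=\xi_tdt+\xi_rdr+\xi_\theta d\theta+\xi_\varphi d\varphi$, so $\xi\cdot\partial_t=\xi_t$. $v_{\mathcal H}=\partial_t+\Omega_{\mathcal H}\partial_\varphi$ with $\Omega_{\mathcal H}=a/(r_+^2+a^2)$. With $p(x,\xi)=g_x^{-1}(\xi,\xi)$, null bicharacteristics are integral curves of the Hamiltonian vector field $H_p$ in $\{p=0\}\setminus o\subset T^*{\rm M}_{\rm I}$. A maximally extended bicharacteristic $\gamma$ is trapped as $s\to+\infty$ if there are $r_+<r_0<R_0<\infty$ with $r_0\le r(\gamma(s))\le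 R_0$ for all $s\ge 0$; $\Gamma^-$ is the union of all bicharacteristics trapped as $s\to+\infty$, and $\Gamma^+$ the union of those trapped as $s\to-\infty$. *)

(* Defs.v *)
From Stdlib Require Import Reals Lra.
From Coquelicot Require Import Coquelicot.
Open Scope R_scope.

(* ------------------------------------------------------------------------
   Phase space T^*M_I, globally (no coordinate singularity at the poles).
   The sphere S^2 is embedded in R^3 as the unit sphere, and T^*S^2 is
   realised as {(w, e) in R^3 x R^3 : |w| = 1, w.e = 0}, the covector
   at w being u |-> e.u on T_w S^2 = w^perp.
   A phase-space point is z : nat -> R, only the indices 0..9 matter:
     z 0 = t,  z 1 = r,  (z 2, z 3, z 4) = w  (point of S^2),
     z 5 = xi_t, z 6 = xi_r, (z 7, z 8, z 9) = e (covector on S^2).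
   Position coordinate i (i < 5) is conjugate to momentum i+5.
   In Boyer-Lindquist terms w = (sin th cos ph, sin th sin ph, cos th),
   cos th = w_3, and xi_phi = e(d_phi) = ((e_z x w) . e) = w1 e2 - w2 e1.
   ------------------------------------------------------------------------ *)

Definition r_plus (M a : R) : R := M + sqrt (M * M - a * a).
Definition Delta (M a r : R) : R := r * r - 2 * M * r + a * a.

Definition wnorm2 (z : nat -> R) : R := z 2%nat ^ 2 + z 3%nat ^ 2 + z 4%nat ^ 2.
Definition cos2 (z : nat -> R) : R := z 4%nat ^ 2 / wnorm2 z.
Definition rho2 (a : R) (z : nat -> R) : R := z 1%nat ^ 2 + a ^ 2 * cos2 z.

(* angular momentum L = w x e; on T^*S^2, |L|^2 = |e|^2 = xi_th^2 +
   xi_ph^2 / sin^2 th and L_z = xi_phi *)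
Definition Lx (z : nat -> R) : R := z 3%nat * z 9%nat - z 4%nat * z 8%nat.
Definition Ly (z : nat -> R) : R := z 4%nat * z 7%nat - z 2%nat * z 9%nat.
Definition Lz (z : nat -> R) : R := z 2%nat * z 8%nat - z 3%nat * z 7%nat.
Definition xi_phi (z : nat -> R) : R := Lz z.

(* p(x,xi) = g^{-1}_x(xi,xi) for the Kerr metric, written out:
   rho^2 p = Delta xi_r^2 - ((r^2+a^2) xi_t + a xi_phi)^2 / Delta
             + xi_th^2 + (xi_phi + a sin^2 th xi_t)^2 / sin^2 th,
   where xi_th^2 + (xi_phi + a sin^2 th xi_t)^2/sin^2 th
       = |L|^2 + 2 a xi_t L_z + a^2 sin^2 th xi_t^2  (smooth across the axis).
   The expression is invariant under (w,e) -> (l w, e / l), so its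
   Hamiltonian flow on R^10 preserves |w| = 1 and w.e = 0 and restricts
   to the Hamiltonian flow of p on T^*M_I. *)
Definition p_kerr (M a : R) (z : nat -> R) : R :=
  let r := z 1%nat in
  let xt := z 5%nat in
  let xr := z 6%nat in
  let D := Delta M a r in
  ( D * xr ^ 2
    - ((r ^ 2 + a ^ 2) * xt + a * Lz z) ^ 2 / D
    + (Lx z ^ 2 + Ly z ^ 2 + Lz z ^ 2)
    + 2 * a * xt * Lz z
    + a ^ 2 * (1 - cos2 z) * xt ^ 2 ) / rho2 a z.

Definition upd (z : nat -> R) (i : nat) (y : R) : nat -> R :=
  fun j => if Nat.eqb j i then y else z j.
Definition dpart (P : (nat -> R) -> R) (i : nat) (z : nat -> R) : R :=
  Derive (fun y => P (upd z i y)) (z i).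

Definition Hp (M a : R) (z : nat -> R) (i : nat) : R :=
  if Nat.ltb i 5 then dpart (p_kerr M a) (i + 5) z
  else - dpart (p_kerr M a) (i - 5) z.

Definition in_char_set (M a : R) (z : nat -> R) : Prop :=
  r_plus M a < z 1%nat /\
  wnorm2 z = 1 /\
  z 2%nat * z 7%nat + z 3%nat * z 8%nat + z 4%nat * z 9%nat = 0 /\
  ~ (z 5%nat = 0 /\ z 6%nat = 0 /\ z 7%nat = 0 /\ z 8%nat = 0 /\ z 9%nat = 0) /\
  p_kerr M a z = 0.

Definition in_dom (lo hi : Rbar) (s : R) : Prop := Rbar_lt lo s /\ Rbar_lt s hi.

Definition bichar (M a : R) (lo hi : Rbar) (g : R -> nat -> R) : Prop :=
  Rbar_lt lo hi /\
  forall s, in_dom lo hi s ->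
    in_char_set M a (g s) /\
    forall i, (i < 10)%nat -> is_derive (fun s' => g s' i) s (Hp M a (g s) i).

Definition max_bichar (M a : R) (lo hi : Rbar) (g : R -> nat -> R) : Prop :=
  bichar M a lo hi g /\
  forall lo' hi' g', bichar M a lo' hi' g' ->
    Rbar_le lo' lo -> Rbar_le hi hi' ->
    (forall s i, in_dom lo hi s -> (i < 10)%nat -> g' s i = g s i) ->
    lo' = lo /\ hi' = hi.

Definition trapped_fwd (M a : R) (lo hi : Rbar) (g : R -> nat -> R) : Prop :=
  Rbar_lt lo 0 /\ hi = p_infty /\
  exists r0 R0, r_plus M a < r0 /\ r0 < R0 /\
    forall s, 0 <= s -> r0 <= g s 1%nat <= R0.
Definition trapped_bwd (M a : R) (lo hi : Rbar) (g : R -> nat -> R) : Prop :=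
  Rbar_lt 0 hi /\ lo = m_infty /\
  exists r0 R0, r_plus M a < r0 /\ r0 < R0 /\
    forall s, s <= 0 -> r0 <= g s 1%nat <= R0.

Definition on_curve (lo hi : Rbar) (g : R -> nat -> R) (z : nat -> R) : Prop :=
  exists s0, in_dom lo hi s0 /\ forall i, (i < 10)%nat -> g s0 i = z i.

Definition Gamma_minus (M a : R) (z : nat -> R) : Prop :=
  exists lo hi g, max_bichar M a lo hi g /\ trapped_fwd M a lo hi g /\ on_curve lo hi g z.
Definition Gamma_plus (M a : R) (z : nat -> R) : Prop :=
  exists lo hi g, max_bichar M a lo hi g /\ trapped_bwd M a lo hi g /\ on_curve lo hi g z.

(* ---- tangent vectors and the metric ----
   A tangent vector at the base point of z is v = (vt, vr, u) with
   u in R^3, u.w = 0 (tangent to S^2).  In BL terms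
   |u|^2 = dth^2 + sin^2 th dph^2 and  sin^2 th dph(u) = (e_z x w).u.
   g(v,v) = -(1-2Mr/rho^2) vt^2 - (4aMr/rho^2) vt (sin^2 th dph)
            + (rho^2/Delta) vr^2 + rho^2 |u|^2
            + a^2 (1 + 2Mr/rho^2) (sin^2 th dph)^2,
   which equals the BL expression in the context. *)
Definition tangent_at (z : nat -> R) (u1 u2 u3 : R) : Prop :=
  z 2%nat * u1 + z 3%nat * u2 + z 4%nat * u3 = 0.

Definition g_kerr (M a : R) (z : nat -> R) (vt vr u1 u2 u3 : R) : R :=
  let r := z 1%nat in
  let rh := rho2 a z in
  let wz := - z 3%nat * u1 + z 2%nat * u2 in
  - (1 - 2 * M * r / rh) * vt ^ 2
  - (4 * a * M * r / rh) * vt * wz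
  + (rh / Delta M a r) * vr ^ 2
  + rh * (u1 ^ 2 + u2 ^ 2 + u3 ^ 2)
  + a ^ 2 * (1 + 2 * M * r / rh) * wz ^ 2.

(* future directed timelike: g(v,v) < 0 and g(v, -grad t) < 0; since
   g(v, grad t) = dt(v) = vt, the latter is 0 < vt. *)
Definition future_timelike (M a : R) (z : nat -> R) (vt vr u1 u2 u3 : R) : Prop :=
  tangent_at z u1 u2 u3 /\ g_kerr M a z vt vr u1 u2 u3 < 0 /\ 0 < vt.

Definition pair (z : nat -> R) (vt vr u1 u2 u3 : R) : R :=
  z 5%nat * vt + z 6%nat * vr + z 7%nat * u1 + z 8%nat * u2 + z 9%nat * u3.

Definition future_pointing (M a : R) (z : nat -> R) : Prop :=
  forall vt vr u1 u2 u3, future_timelike M a z vt vr u1 u2 u3 ->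
    0 < pair z vt vr u1 u2 u3.

Definition Omega_H (M a : R) : R := a / (r_plus M a ^ 2 + a ^ 2).
Definition xi_dt (z : nat -> R) : R := z 5%nat.
Definition xi_vH (M a : R) (z : nat -> R) : R := z 5%nat + Omega_H M a * xi_phi z.

(* Main.v *)
From Pilot Require Import Defs.
From Stdlib Require Import Reals Lra Psatz.
From Coquelicot Require Import Coquelicot.
Import Pilot.Defs.
Open Scope R_scope.

Definition Fk (a : R) (z : nat -> R) : R := (z 1%nat ^ 2 + a ^ 2) * z 5%nat + a * Lz z.
Definition Pth (a : R) (z : nat -> R) : R :=
  Lx z ^ 2 + Ly z ^ 2 + Lz z ^ 2 + 2 * a * z 5%nat * Lz z + a ^ 2 * (1 - cos2 z) * z 5%nat ^ 2.
Definition Nk (M a : R) (z : nat -> R) : R :=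
  Delta M a (z 1%nat) * z 6%nat ^ 2 - Fk a z ^ 2 / Delta M a (z 1%nat) + Pth a z.
Definition dang (M a : R) (z : nat -> R) (dLx dLy dLz dc : R) : R :=
  (- 2 * Fk a z * a * dLz / Delta M a (z 1%nat) + 2 * Lx z * dLx + 2 * Ly z * dLy
   + 2 * Lz z * dLz + 2 * a * z 5%nat * dLz - a ^ 2 * z 5%nat ^ 2 * dc) / rho2 a z
  - Nk M a z * a ^ 2 * dc / rho2 a z ^ 2.

Definition goodpt (M a : R) (z : nat -> R) : Prop :=
  Delta M a (z 1%nat) <> 0 /\ wnorm2 z <> 0 /\
  z 1%nat ^ 2 * wnorm2 z + a ^ 2 * z 4%nat ^ 2 <> 0.

Ltac nzt := match goal with
  | |- _ /\ _ => split; nzt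
  | |- _ <> 0 => let Hc := fresh in intro Hc;
      first [ match goal with H : ?X <> 0 |- _ => apply H; rewrite <- Hc; ring end
            | lra
            | match goal with HR : ?P <> 0, HW : ?W <> 0, Hc : ?L = 0 |- False =>
                apply HR; replace P with (L * W) by (field; let HH := fresh in intro HH; apply HW; rewrite <- HH; ring); rewrite Hc; ring end
            | idtac ]
  | |- True => exact I
  | _ => idtac end.

Ltac dstart := unfold dpart; apply is_derive_unique;
  unfold goodpt, dang, Nk, Pth, Fk, p_kerr, rho2, cos2, wnorm2, upd, Lx, Ly, Lz, Delta in *; simpl.

Lemma d6 M a z : goodpt M a z ->
  dpart (p_kerr M a) 6 z = 2 * Delta M a (z 1%nat) * z 6%nat / rho2 a z.
Proof.
intros [HD [Hw Hr]]. dstart. auto_derive; [nzt | field; nzt].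
Qed.

Lemma d1 M a z : goodpt M a z ->
  dpart (p_kerr M a) 1 z =
  ((2 * z 1%nat - 2 * M) * z 6%nat ^ 2
    - (2 * Fk a z * (2 * z 1%nat * z 5%nat) * Delta M a (z 1%nat)
       - Fk a z ^ 2 * (2 * z 1%nat - 2 * M)) / Delta M a (z 1%nat) ^ 2) / rho2 a z
  - Nk M a z * (2 * z 1%nat) / rho2 a z ^ 2.
Proof.
intros [HD [Hw Hr]]. dstart. auto_derive; [nzt | field; nzt]. 
Qed.

Lemma d2 M a z : goodpt M a z ->
  dpart (p_kerr M a) 2 z = dang M a z 0 (- z 9%nat) (z 8%nat)
     (- 2 * z 2%nat * z 4%nat ^ 2 / wnorm2 z ^ 2).
Proof.
intros [HD [Hw Hr]]. dstart. auto_derive; [nzt | field; nzt].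
Qed.

Lemma d3 M a z : goodpt M a z ->
  dpart (p_kerr M a) 3 z = dang M a z (z 9%nat) 0 (- z 7%nat)
     (- 2 * z 3%nat * z 4%nat ^ 2 / wnorm2 z ^ 2).
Proof.
intros [HD [Hw Hr]]. dstart. auto_derive; [nzt | field; nzt].
Qed.

Lemma d7 M a z : goodpt M a z ->
  dpart (p_kerr M a) 7 z = dang M a z 0 (z 4%nat) (- z 3%nat) 0.
Proof.
intros [HD [Hw Hr]]. dstart. auto_derive; [nzt | field; nzt].
Qed.

Lemma d8 M a z : goodpt M a z ->
  dpart (p_kerr M a) 8 z = dang M a z (- z 4%nat) 0 (z 2%nat) 0.
Proof.
intros [HD [Hw Hr]]. dstart. auto_derive; [nzt | field; nzt].
Qed.

Lemma d0 M a z : dpart (p_kerr M a) 0 z = 0.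
Proof.
unfold dpart. apply is_derive_unique.
apply is_derive_ext with (fun _ => p_kerr M a z).
- intro t. reflexivity.
- auto_derive; auto.
Qed.

Lemma dLz M a z : goodpt M a z ->
  z 8%nat * dpart (p_kerr M a) 7 z - z 2%nat * dpart (p_kerr M a) 3 z
  - z 7%nat * dpart (p_kerr M a) 8 z + z 3%nat * dpart (p_kerr M a) 2 z = 0.
Proof.
intros H. rewrite d7, d3, d8, d2 by exact H.
destruct H as [HD [Hw Hr]].
assert (HR2 : z 1%nat ^ 2 + a ^ 2 * (z 4%nat ^ 2 / wnorm2 z) <> 0).
{ intro Hc; apply Hr. replace (z 1%nat ^ 2 * wnorm2 z + a ^ 2 * z 4%nat ^ 2) with
  ((z 1%nat ^ 2 + a ^ 2 * (z 4%nat ^ 2 / wnorm2 z)) * wnorm2 z) by (field; exact Hw).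
  rewrite Hc; ring. }
unfold dang, Lx, Ly, Lz, rho2, cos2. field. repeat split; auto. intro Hc; apply Hr; rewrite <- Hc; ring.
Qed.

Lemma sq3 x y z : 0 <= x^2 + y^2 + z^2.
Proof. generalize (pow2_ge_0 x) (pow2_ge_0 y) (pow2_ge_0 z); lra. Qed.

Lemma fp_alg (M a r E xr e1 e2 e3 w1 w2 w3 vt vr u1 u2 u3 D rho F g : R) :
  0 < M -> 0 < r -> 0 < D -> 0 < rho ->
  w1^2 + w2^2 + w3^2 = 1 ->
  w1*e1 + w2*e2 + w3*e3 = 0 ->
  D = r*r - 2*M*r + a*a ->
  rho = r^2 + a^2 * w3^2 ->
  F = (r^2 + a^2) * E + a * (w1*e2 - w2*e1) ->
  F^2 = D^2 * xr^2 + D * ((e1 - a*E*w2)^2 + (e2 + a*E*w1)^2 + e3^2) ->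
  g = - (1 - 2 * M * r / rho) * vt ^ 2 - (4 * a * M * r / rho) * vt * (- w2 * u1 + w1 * u2)
      + (rho / D) * vr ^ 2 + rho * (u1 ^ 2 + u2 ^ 2 + u3 ^ 2)
      + a ^ 2 * (1 + 2 * M * r / rho) * (- w2 * u1 + w1 * u2) ^ 2 ->
  g < 0 -> 0 < vt -> 0 < F ->
  0 < E*vt + xr*vr + e1*u1 + e2*u2 + e3*u3.
Proof.
intros HM Hr HD Hrho Hw Hwe HDe Hrhoe HF HN Hg0 Hgn Hvt HFp.
assert (Hg : rho * g = - D * (vt - a*(-w2*u1 + w1*u2))^2 + rho^2 * vr^2 / D
      + ((rho*u1 + a*(vt - a*(-w2*u1 + w1*u2))*w2)^2
         + (rho*u2 - a*(vt - a*(-w2*u1 + w1*u2))*w1)^2 + (rho*u3)^2)).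
{ assert (Hrn : rho <> 0) by lra. assert (HDn : D <> 0) by lra.
  rewrite Hg0. rewrite HDe in HDn |- *. rewrite Hrhoe in Hrn |- *.
  assert (H3 : w3^2 = 1 - w1^2 - w2^2) by lra. rewrite H3 in Hrn |- *.
  field. auto. }
set (W := -w2*u1 + w1*u2) in *.
set (X := vt - a*W) in *.
set (U1 := rho*u1 + a*X*w2) in *.
set (U2 := rho*u2 - a*X*w1) in *.
set (U3 := rho*u3) in *.
set (n1 := e1 - a*E*w2) in *.
set (n2 := e2 + a*E*w1) in *.
set (n3 := e3) in *.
assert (HU : U1^2 + U2^2 + U3^2 < D * X^2).
{ assert (rho * g < 0) by nra.
  assert (0 <= rho^2 * vr^2 / D).
  { apply Rmult_le_pos; [nra | left; apply Rinv_0_lt_compat; lra]. }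
  lra. }
assert (HkU : a * (-w2*U1 + w1*U2) = rho*vt - (r^2+a^2)*X).
{ unfold U1, U2, X, W. rewrite Hrhoe.
  replace (w3^2) with (1 - w1^2 - w2^2) by lra. ring. }
assert (HCS1 : (-w2*U1 + w1*U2)^2 <= U1^2 + U2^2 + U3^2).
{ assert (E1 : (w1^2+w2^2)*(U1^2+U2^2) - (-w2*U1 + w1*U2)^2 = (w1*U1 + w2*U2)^2) by ring.
  assert (0 <= w3^2) by apply pow2_ge_0.
  assert (0 <= (w1*U1 + w2*U2)^2) by apply pow2_ge_0.
  assert (0 <= U1^2 + U2^2) by (generalize (pow2_ge_0 U1) (pow2_ge_0 U2); lra).
  assert (0 <= U3^2) by apply pow2_ge_0.
  assert ((w1^2+w2^2)*(U1^2+U2^2) <= U1^2+U2^2).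
  { replace (w1^2+w2^2) with (1 - w3^2) by lra. nra. }
  lra. }
assert (HX : 0 < X).
{ destruct (Rle_or_lt X 0) as [HX|HX]; [exfalso|exact HX].
  assert (Hb : a^2 * D <= (r^2+a^2)^2) by (rewrite HDe; nra).
  assert (Hpos : (r^2+a^2) * (-X) < a * (-w2*U1 + w1*U2)).
  { rewrite HkU. nra. }
  assert (0 <= (r^2+a^2) * (-X)) by nra.
  assert ((a * (-w2*U1 + w1*U2))^2 <= a^2 * D * X^2).
  { replace ((a * (-w2*U1 + w1*U2))^2) with (a^2 * (-w2*U1 + w1*U2)^2) by ring.
    assert (0 <= a^2) by nra. nra. }
  nra. }
assert (Hpair : rho * (E*vt + xr*vr + e1*u1 + e2*u2 + e3*u3)
   = F * X + (rho * xr * vr + (n1*U1 + n2*U2 + n3*U3))).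
{ unfold U1, U2, U3, n1, n2, n3, X, W. rewrite HF, Hrhoe.
  replace (w3^2) with (1 - w1^2 - w2^2) by lra. ring. }
set (S := rho * xr * vr + (n1*U1 + n2*U2 + n3*U3)) in *.
assert (HDg : D * (rho * g) = - D^2 * X^2 + rho^2 * vr^2 + D * (U1^2 + U2^2 + U3^2)).
{ rewrite Hg. field. lra. }
assert (HCS : D^2 * S^2 <= F^2 * (rho^2 * vr^2 + D * (U1^2 + U2^2 + U3^2))).
{ rewrite HN.
  set (x0 := D * xr). set (y0 := rho * vr).
  assert (Eq : (D^2 * xr^2 + D * (n1^2 + n2^2 + n3^2)) * (rho^2 * vr^2 + D * (U1^2 + U2^2 + U3^2))
     - D^2 * S^2 = D * ((x0*U1 - y0*n1)^2 + (x0*U2 - y0*n2)^2 + (x0*U3 - y0*n3)^2)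
       + D^2 * ((n1*U2 - n2*U1)^2 + (n1*U3 - n3*U1)^2 + (n2*U3 - n3*U2)^2)).
  { unfold S, x0, y0. ring. }
  assert (0 <= D * ((x0*U1 - y0*n1)^2 + (x0*U2 - y0*n2)^2 + (x0*U3 - y0*n3)^2)) by
    (apply Rmult_le_pos; [lra | apply sq3]).
  assert (0 <= D^2 * ((n1*U2 - n2*U1)^2 + (n1*U3 - n3*U1)^2 + (n2*U3 - n3*U2)^2)) by
    (apply Rmult_le_pos; [apply pow2_ge_0 | apply sq3]).
  lra. }
assert (HS : S^2 < (F*X)^2).
{ assert (Hlt : rho^2 * vr^2 + D * (U1^2 + U2^2 + U3^2) < D^2 * X^2).
  { assert (D * (rho * g) < 0).
    { assert (rho * g < 0) by nra. nra. }
    lra. }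
  assert (0 < F^2) by nra.
  assert (F^2 * (rho^2 * vr^2 + D * (U1^2 + U2^2 + U3^2)) < F^2 * (D^2 * X^2)) by nra.
  assert (0 < D^2) by nra.
  replace ((F*X)^2) with (F^2 * X^2) by ring.
  apply (Rmult_lt_reg_l (D^2)); [lra|]. nra. }
assert (0 < F * X) by nra.
assert (0 < rho * (E*vt + xr*vr + e1*u1 + e2*u2 + e3*u3)).
{ rewrite Hpair. nra. }
apply (Rmult_lt_reg_l rho); [lra|]. rewrite Rmult_0_r. match goal with H: 0 < rho * _ |- _ => exact H end.
Qed.

Definition sqd (M a : R) := sqrt (M * M - a * a).

Lemma sqd_facts M a : 0 < Rabs a < M ->
  0 < sqd M a /\ sqd M a * sqd M a = M * M - a * a /\ sqd M a < M /\ r_plus M a = M + sqd M a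
  /\ 0 < a * a.
Proof.
intros [Ha HaM].
assert (Haa : a * a = Rabs a * Rabs a) by (rewrite <- Rabs_mult, Rabs_right; [ring | nra]).
assert (H0 : 0 < M * M - a * a) by nra.
unfold sqd, r_plus. repeat split.
- apply sqrt_lt_R0; lra.
- apply sqrt_sqrt; lra.
- assert (sqrt (M*M - a*a) < sqrt (M*M)) by (apply sqrt_lt_1; nra).
  rewrite sqrt_square in H by lra. exact H.
- nra.
Qed.

Lemma Delta_pos M a r : 0 < Rabs a < M -> r_plus M a < r -> M < r /\ 0 < Delta M a r.
Proof.
intros HM Hr. destruct (sqd_facts M a HM) as (Hs & Hs2 & HsM & Hrp & Ha).
rewrite Hrp in Hr. unfold Delta. split; nra.
Qed.

Lemma p_kerr_Nk M a z : p_kerr M a z = Nk M a z / rho2 a z.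
Proof. unfold p_kerr, Nk, Pth, Fk. cbv zeta. unfold Rdiv. ring. Qed.

Lemma char_facts M a z : 0 < Rabs a < M -> in_char_set M a z ->
  M < z 1%nat /\ 0 < Delta M a (z 1%nat) /\ wnorm2 z = 1 /\ cos2 z = z 4%nat ^ 2 /\
  rho2 a z = z 1%nat ^ 2 + a ^ 2 * z 4%nat ^ 2 /\
  z 1%nat ^ 2 <= rho2 a z /\ rho2 a z <= z 1%nat ^ 2 + a ^ 2 /\ 0 < rho2 a z /\
  goodpt M a z /\ Nk M a z = 0 /\
  Pth a z = (z 7%nat - a * z 5%nat * z 3%nat) ^ 2 + (z 8%nat + a * z 5%nat * z 2%nat) ^ 2
            + z 9%nat ^ 2 /\
  Fk a z ^ 2 = Delta M a (z 1%nat) ^ 2 * z 6%nat ^ 2 + Delta M a (z 1%nat) * Pth a z.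
Proof.
intros HM [Hr [Hw [Hwe [Hnz Hp]]]].
destruct (Delta_pos M a (z 1%nat) HM Hr) as [HrM HD].
assert (HM0 : 0 < M) by (generalize (Rabs_pos a); lra).
assert (Hc : cos2 z = z 4%nat ^ 2) by (unfold cos2; rewrite Hw; field).
assert (Hrho : rho2 a z = z 1%nat ^ 2 + a ^ 2 * z 4%nat ^ 2) by (unfold rho2; rewrite Hc; ring).
unfold wnorm2 in Hw.
assert (H4 : z 4%nat ^ 2 <= 1) by (generalize (pow2_ge_0 (z 2%nat)) (pow2_ge_0 (z 3%nat)); lra).
assert (Hr1 : z 1%nat ^ 2 <= rho2 a z) by (rewrite Hrho; generalize (pow2_ge_0 a) (pow2_ge_0 (z 4%nat)); nra).
assert (Hr2 : rho2 a z <= z 1%nat ^ 2 + a ^ 2) by (rewrite Hrho; generalize (pow2_ge_0 a); nra).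
assert (Hr0 : 0 < rho2 a z) by nra.
assert (HNk : Nk M a z = 0).
{ rewrite p_kerr_Nk in Hp. apply (Rmult_eq_reg_r (/ rho2 a z)).
  - rewrite Rmult_0_l. exact Hp.
  - apply Rinv_neq_0_compat; lra. }
assert (HPth : Pth a z = (z 7%nat - a * z 5%nat * z 3%nat) ^ 2 + (z 8%nat + a * z 5%nat * z 2%nat) ^ 2
            + z 9%nat ^ 2).
{ unfold Pth. rewrite Hc.
  assert (HL : Lx z ^ 2 + Ly z ^ 2 + Lz z ^ 2 =
     (z 2%nat ^ 2 + z 3%nat ^ 2 + z 4%nat ^ 2) * (z 7%nat ^ 2 + z 8%nat ^ 2 + z 9%nat ^ 2)
     - (z 2%nat * z 7%nat + z 3%nat * z 8%nat + z 4%nat * z 9%nat) ^ 2)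
    by (unfold Lx, Ly, Lz; ring).
  rewrite HL, Hw, Hwe. unfold Lz.
  replace (1 - z 4%nat ^ 2) with (z 2%nat ^ 2 + z 3%nat ^ 2) by lra. ring. }
split; [exact HrM|]. split; [exact HD|]. split; [unfold wnorm2; exact Hw|].
split; [exact Hc|]. split; [exact Hrho|]. split; [exact Hr1|]. split; [exact Hr2|].
split; [exact Hr0|].
split. { unfold goodpt, wnorm2. rewrite Hw. repeat split; apply Rgt_not_eq; nra. }
split; [exact HNk|]. split; [exact HPth|].
{ unfold Nk in HNk.
  assert (E : Fk a z ^ 2 / Delta M a (z 1%nat) = Delta M a (z 1%nat) * z 6%nat ^ 2 + Pth a z) by lra.
  replace (Fk a z ^ 2) with (Delta M a (z 1%nat) * (Fk a z ^ 2 / Delta M a (z 1%nat))) by (field; lra).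
  rewrite E. ring. }
Qed.

Lemma sq0 x : x ^ 2 = 0 -> x = 0.
Proof. intro H. apply Rsqr_0_uniq. unfold Rsqr. rewrite <- H. ring. Qed.

Definition alph (a : R) (z : nat -> R) : R := Lz z + a * (1 - z 4%nat ^ 2) * z 5%nat.

Lemma alpha_facts M a z : 0 < Rabs a < M -> in_char_set M a z ->
  a * alph a z = Fk a z - rho2 a z * z 5%nat /\ alph a z ^ 2 <= Pth a z.
Proof.
intros HM Hc.
destruct (char_facts M a z HM Hc) as
  (HrM & HD & Hw & Hcos & Hrho & Hr1 & Hr2 & Hr0 & Hgood & HNk & HPth & HF2).
split.
- rewrite Hrho. unfold alph, Fk. ring.
- rewrite HPth. unfold wnorm2 in Hw.
  set (n1 := z 7%nat - a * z 5%nat * z 3%nat).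
  set (n2 := z 8%nat + a * z 5%nat * z 2%nat).
  assert (Ha : alph a z = - z 3%nat * n1 + z 2%nat * n2).
  { unfold alph, n1, n2, Lz. replace (1 - z 4%nat ^ 2) with (z 2%nat ^ 2 + z 3%nat ^ 2) by lra. ring. }
  rewrite Ha.
  assert (E1 : (z 2%nat ^ 2 + z 3%nat ^ 2) * (n1 ^ 2 + n2 ^ 2) - (- z 3%nat * n1 + z 2%nat * n2) ^ 2
     = (z 2%nat * n1 + z 3%nat * n2) ^ 2) by ring.
  assert (0 <= (z 2%nat * n1 + z 3%nat * n2) ^ 2) by apply pow2_ge_0.
  assert (0 <= z 4%nat ^ 2) by apply pow2_ge_0.
  assert (0 <= n1 ^ 2 + n2 ^ 2) by (generalize (pow2_ge_0 n1) (pow2_ge_0 n2); lra).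
  assert (0 <= z 9%nat ^ 2) by apply pow2_ge_0.
  assert ((z 2%nat ^ 2 + z 3%nat ^ 2) * (n1 ^ 2 + n2 ^ 2) <= n1 ^ 2 + n2 ^ 2).
  { replace (z 2%nat ^ 2 + z 3%nat ^ 2) with (1 - z 4%nat ^ 2) by lra. nra. }
  lra.
Qed.

Lemma F_ne0 M a z : 0 < Rabs a < M -> in_char_set M a z -> Fk a z <> 0.
Proof.
intros HM Hc HF.
destruct (char_facts M a z HM Hc) as
  (HrM & HD & Hw & Hcos & Hrho & Hr1 & Hr2 & Hr0 & Hgood & HNk & HPth & HF2).
destruct Hc as [_ [_ [_ [Hnz _]]]].
rewrite HF in HF2.
set (D := Delta M a (z 1%nat)) in *.
assert (HP0 : 0 <= Pth a z) by (rewrite HPth; apply sq3).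
assert (H1 : 0 <= D ^ 2 * z 6%nat ^ 2) by (apply Rmult_le_pos; apply pow2_ge_0).
assert (H2 : 0 <= D * Pth a z) by (apply Rmult_le_pos; lra).
assert (Hx : D ^ 2 * z 6%nat ^ 2 = 0) by lra.
assert (Hp : D * Pth a z = 0) by lra.
assert (Hp' : Pth a z = 0).
{ apply (Rmult_eq_reg_l D); [rewrite Rmult_0_r; exact Hp | lra]. }
rewrite HPth in Hp'.
generalize (pow2_ge_0 (z 7%nat - a * z 5%nat * z 3%nat)) (pow2_ge_0 (z 8%nat + a * z 5%nat * z 2%nat))
   (pow2_ge_0 (z 9%nat)); intros Q1 Q2 Q3.
assert (E1 : (z 7%nat - a * z 5%nat * z 3%nat) ^ 2 = 0) by lra.
assert (E2 : (z 8%nat + a * z 5%nat * z 2%nat) ^ 2 = 0) by lra.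
assert (E3 : z 9%nat ^ 2 = 0) by lra.
apply sq0 in E1. apply sq0 in E2.
apply sq0 in E3.
assert (Hx6 : z 6%nat = 0).
{ assert (D ^ 2 <> 0) by (apply pow_nonzero; lra).
  assert (z 6%nat ^ 2 = 0).
  { apply (Rmult_eq_reg_l (D ^ 2)); [rewrite Rmult_0_r; exact Hx | auto]. }
  apply sq0 in H0; exact H0. }
assert (H7 : z 7%nat = a * z 5%nat * z 3%nat) by lra.
assert (H8 : z 8%nat = - (a * z 5%nat * z 2%nat)) by lra.
assert (HF' : Fk a z = z 5%nat * rho2 a z).
{ unfold Fk, Lz. rewrite H7, H8, Hrho. unfold wnorm2 in Hw.
  replace (z 4%nat ^ 2) with (1 - z 2%nat ^ 2 - z 3%nat ^ 2) by lra. ring. }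
rewrite HF in HF'.
assert (H5 : z 5%nat = 0).
{ apply (Rmult_eq_reg_r (rho2 a z)); [lra|lra]. }
apply Hnz. rewrite H7, H8, H5. repeat split; try ring; auto.
Qed.

Lemma fp_point M a z : 0 < Rabs a < M -> in_char_set M a z -> 0 < Fk a z ->
  future_pointing M a z.
Proof.
intros HM Hc HF vt vr u1 u2 u3 [Ht [Hg Hvt]].
destruct (char_facts M a z HM Hc) as
  (HrM & HD & Hw & Hcos & Hrho & Hr1 & Hr2 & Hr0 & Hgood & HNk & HPth & HF2).
destruct Hc as [_ [_ [Hwe _]]].
assert (HM0 : 0 < M) by (generalize (Rabs_pos a); lra).
unfold pair.
apply (fp_alg M a (z 1%nat) (z 5%nat) (z 6%nat) (z 7%nat) (z 8%nat) (z 9%nat)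
  (z 2%nat) (z 3%nat) (z 4%nat) vt vr u1 u2 u3 (Delta M a (z 1%nat)) (rho2 a z) (Fk a z)
  (g_kerr M a z vt vr u1 u2 u3)); auto; try lra.
all: try exact Hw.
all: try (unfold Fk, Lz; ring).
all: try (rewrite HF2, HPth; reflexivity).
all: try (unfold g_kerr; reflexivity).
all: try (unfold Delta; ring).
all: match goal with |- ?G => idtac G end.
Qed.

Lemma alg_f x f D a : 0 < x -> 0 < f -> 0 < D -> (x - f)^2 * D <= a^2 * f^2 ->
  2 * x * D <= f * (3 * D + a^2).
Proof.
intros Hx Hf HD H.
destruct (Rle_or_lt (2 * x * D) (f * (3 * D + a^2))) as [h|h]; [exact h|exfalso].
assert (Ha : 0 <= a^2) by apply pow2_ge_0.
assert (H1 : x * (D + a^2) < (x - f) * (3 * D + a^2)) by nra.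
assert (H1' : 0 <= x * (D + a^2)) by nra.
assert (H2 : (x * (D + a^2))^2 < ((x - f) * (3 * D + a^2))^2) by nra.
assert (H3' : 0 < f * (3 * D + a^2)) by nra.
assert (H3 : (f * (3 * D + a^2))^2 < (2 * x * D)^2) by nra.
assert (E4 : (D+a^2)^2 - 4*a^2*D = (D-a^2)^2) by ring.
assert (H4 : 4 * a^2 * D <= (D + a^2)^2) by (generalize (pow2_ge_0 (D - a^2)); lra).
assert (S1 : ((x - f) * (3 * D + a^2))^2 * D <= a^2 * (f * (3 * D + a^2))^2).
{ replace (((x - f) * (3 * D + a^2))^2 * D) with (((x - f)^2 * D) * (3 * D + a^2)^2) by ring.
  replace (a^2 * (f * (3 * D + a^2))^2) with ((a^2 * f^2) * (3 * D + a^2)^2) by ring.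
  apply Rmult_le_compat_r; [apply pow2_ge_0 | exact H]. }
assert (S2 : a^2 * (f * (3 * D + a^2))^2 <= a^2 * (2 * x * D)^2).
{ apply Rmult_le_compat_l; [exact Ha | lra]. }
assert (S3 : (x * (D + a^2))^2 * D < ((x - f) * (3 * D + a^2))^2 * D).
{ apply Rmult_lt_compat_r; [exact HD | exact H2]. }
assert (S4 : (x^2 * D) * (D + a^2)^2 < (x^2 * D) * (4 * a^2 * D)).
{ replace ((x^2 * D) * (D + a^2)^2) with ((x * (D + a^2))^2 * D) by ring.
  replace ((x^2 * D) * (4 * a^2 * D)) with (a^2 * (2 * x * D)^2) by ring. lra. }
assert (S5 : 0 < x^2 * D) by (apply Rmult_lt_0_compat; [apply pow_lt; lra | lra]).
apply Rmult_lt_reg_l in S4; [lra | exact S5].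
Qed.

Lemma div_bound_pos num C rho P : 0 < rho <= P -> 0 <= C -> C <= num -> C / P <= num / rho.
Proof.
intros [H1 H2] HC Hn. apply Rle_trans with (C / rho).
- unfold Rdiv. apply Rmult_le_compat_l; [exact HC|]. apply Rinv_le_contravar; lra.
- unfold Rdiv. apply Rmult_le_compat_r; [left; apply Rinv_0_lt_compat; lra | exact Hn].
Qed.
Lemma div_bound_neg num C rho P : 0 < rho <= P -> 0 <= C -> num <= - C -> num / rho <= - (C / P).
Proof.
intros H HC Hn. assert (C / P <= (- num) / rho) by (apply div_bound_pos; lra).
unfold Rdiv in *. rewrite <- Ropp_mult_distr_l in H0. lra.
Qed.

Ltac nz := repeat split; try assumption;
  try (apply Rgt_not_eq; nra); try (apply Rlt_not_eq; nra).

Definition uder (M a : R) (z : nat -> R) : R :=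
  (4 * z 1%nat * z 5%nat * Fk a z - Pth a z * (2 * z 1%nat - 2 * M)) / rho2 a z.
Definition Gk (M a : R) (z : nat -> R) : R := (r_plus M a ^ 2 + a ^ 2) * z 5%nat + a * Lz z.

Lemma caseA_pt M a z r0 R0 : 0 < Rabs a < M -> in_char_set M a z -> r_plus M a < r0 ->
  r0 <= z 1%nat <= R0 -> 0 < z 5%nat -> Fk a z < 0 ->
  uder M a z <= - (r0 ^ 4 * z 5%nat ^ 2 * (2 * (r0 - M)) / (a ^ 2 * (R0 ^ 2 + a ^ 2))).
Proof.
intros HM Hc Hr0 [Hz1 Hz2] HE HF.
destruct (alpha_facts M a z HM Hc) as [Hal Hal2].
destruct (char_facts M a z HM Hc) as
  (HrM & HD & Hw & Hcos & Hrho & Hr1 & Hr2 & Hrp & Hgood & HNk & HPth & HF2).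
destruct (sqd_facts M a HM) as (Hs & Hs2 & HsM & Hrp' & Haa).
assert (HrM0 : M < r0) by lra.
assert (Ha0 : a <> 0) by (intro h; rewrite h in Haa; lra).
assert (HM0 : 0 < M) by (generalize (Rabs_pos a); lra).
assert (Hrr : r0 ^ 2 <= rho2 a z) by nra.
assert (H1 : a * alph a z <= - (r0 ^ 2 * z 5%nat)) by nra.
assert (H1' : 0 < r0 ^ 2 * z 5%nat) by (apply Rmult_lt_0_compat; [apply pow_lt|]; lra).
assert (H2 : (r0 ^ 2 * z 5%nat) ^ 2 <= (a * alph a z) ^ 2) by nra.
assert (H3 : (a * alph a z) ^ 2 <= a ^ 2 * Pth a z).
{ replace ((a * alph a z) ^ 2) with (a ^ 2 * alph a z ^ 2) by ring.
  apply Rmult_le_compat_l; [apply pow2_ge_0 | exact Hal2]. }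
assert (Ha2 : 0 < a ^ 2) by nra.
assert (HP : r0 ^ 4 * z 5%nat ^ 2 / a ^ 2 <= Pth a z).
{ apply (Rmult_le_reg_l (a ^ 2)); [exact Ha2|].
  replace (a ^ 2 * (r0 ^ 4 * z 5%nat ^ 2 / a ^ 2)) with ((r0 ^ 2 * z 5%nat) ^ 2) by (field; nz).
  lra. }
assert (HPp : 0 <= Pth a z) by (rewrite HPth; apply sq3).
assert (Hn1 : 4 * z 1%nat * z 5%nat * Fk a z <= 0).
{ assert (0 < 4 * z 1%nat * z 5%nat) by nra. nra. }
assert (Hn2 : (r0 ^ 4 * z 5%nat ^ 2 / a ^ 2) * (2 * (r0 - M)) <= Pth a z * (2 * z 1%nat - 2 * M)).
{ apply Rmult_le_compat; try lra. unfold Rdiv. apply Rmult_le_pos; [|left; apply Rinv_0_lt_compat; lra].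
  apply Rmult_le_pos; [left; apply pow_lt; lra | apply pow2_ge_0]. }
unfold uder.
replace (r0 ^ 4 * z 5%nat ^ 2 * (2 * (r0 - M)) / (a ^ 2 * (R0 ^ 2 + a ^ 2))) with
  (((r0 ^ 4 * z 5%nat ^ 2 / a ^ 2) * (2 * (r0 - M))) / (R0 ^ 2 + a ^ 2)) by (field; nz).
apply div_bound_neg.
- split; [exact Hrp|]. nra.
- apply Rmult_le_pos; [|lra]. unfold Rdiv. apply Rmult_le_pos; [|left; apply Rinv_0_lt_compat; lra].
  apply Rmult_le_pos; [left; apply pow_lt; lra | apply pow2_ge_0].
- lra.
Qed.

Lemma bracket M a r : 0 < Rabs a < M -> r_plus M a < r ->
  0 <= 4 * r * Delta M a r - (r ^ 2 - r_plus M a ^ 2) * (2 * r - 2 * M).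
Proof.
intros HM Hr. destruct (sqd_facts M a HM) as (Hs & Hs2 & HsM & Hrp & Haa).
rewrite Hrp in *. unfold Delta.
assert (Ea : a * a = M * M - sqd M a * sqd M a) by lra. rewrite Ea.
set (q := sqd M a) in *.
assert (E : 4 * r * (r * r - 2 * M * r + (M * M - q * q)) - (r ^ 2 - (M + q) ^ 2) * (2 * r - 2 * M)
  = 2 * (r - (M + q)) * ((r - (2 * M - q) / 2) ^ 2 + q * (8 * M - q) / 4)) by (field).
rewrite E. clear E.
apply Rmult_le_pos; [lra|].
assert (0 <= (r - (2 * M - q) / 2) ^ 2) by apply pow2_ge_0.
assert (0 <= q * (8 * M - q)) by (apply Rmult_le_pos; lra). lra.
Qed.

Lemma Delta_mono M a r1 r2 : M <= r1 <= r2 -> Delta M a r1 <= Delta M a r2.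
Proof. intros [H1 H2]. unfold Delta. nra. Qed.

Lemma caseB_pt M a z r0 R0 : 0 < Rabs a < M -> in_char_set M a z -> r_plus M a < r0 ->
  r0 <= z 1%nat <= R0 -> z 5%nat < 0 -> Fk a z < 0 -> 0 < Gk M a z ->
  (2 * r0 ^ 2 * (- z 5%nat) * Delta M a r0 / (3 * Delta M a R0 + a ^ 2)) * Gk M a z
    * (2 * (r0 - M)) / (Delta M a R0 * (R0 ^ 2 + a ^ 2)) <= uder M a z.
Proof.
intros HM Hc Hr0 [Hz1 Hz2] HE HF HG.
destruct (alpha_facts M a z HM Hc) as [Hal Hal2].
destruct (char_facts M a z HM Hc) as
  (HrM & HD & Hw & Hcos & Hrho & Hr1 & Hr2 & Hrp & Hgood & HNk & HPth & HF2).
destruct (sqd_facts M a HM) as (Hs & Hs2 & HsM & Hrp' & Haa).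
assert (HrM0 : M < r0) by lra.
assert (Ha0 : a <> 0) by (intro h; rewrite h in Haa; lra).
assert (HM0 : 0 < M) by (generalize (Rabs_pos a); lra).
destruct (Delta_pos M a r0 HM Hr0) as [_ HD0].
assert (HDm : Delta M a r0 <= Delta M a (z 1%nat)) by (apply Delta_mono; lra).
assert (HDM : Delta M a (z 1%nat) <= Delta M a R0) by (apply Delta_mono; lra).
remember (Delta M a (z 1%nat)) as D.
remember (Delta M a r0) as D0.
remember (Delta M a R0) as D1.
remember (Fk a z) as F.
remember (z 5%nat) as E.
remember (rho2 a z) as rho.
remember (Pth a z) as P.
remember (Gk M a z) as G.
remember (z 1%nat) as r.
assert (Hrr : r0 ^ 2 <= rho) by nra.
assert (HPD : D * P <= F ^ 2) by (rewrite HF2; generalize (pow2_ge_0 (z 6%nat)); nra).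
assert (Hxf : (rho * (- E) - (- F)) ^ 2 * D <= a ^ 2 * (- F) ^ 2).
{ replace (rho * (- E) - (- F)) with (a * alph a z) by lra.
  replace ((a * alph a z) ^ 2 * D) with (a ^ 2 * (alph a z ^ 2 * D)) by ring.
  replace ((- F) ^ 2) with (F ^ 2) by ring.
  apply Rmult_le_compat_l; [apply pow2_ge_0|]. nra. }
assert (Hx0 : 0 < rho * (- E)) by nra.
assert (Hf := alg_f (rho * (- E)) (- F) D a Hx0 ltac:(lra) ltac:(lra) Hxf).
assert (Ha2 : 0 < a ^ 2) by nra.
remember (2 * r0 ^ 2 * (- E) * D0 / (3 * D1 + a ^ 2)) as fm eqn:Hfmdef.
assert (Hfm : fm <= - F).
{ assert (HK : 0 < 3 * D + a ^ 2) by lra.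
  apply (Rmult_le_reg_r (3 * D + a ^ 2)); [exact HK|].
  apply Rle_trans with (fm * (3 * D1 + a ^ 2)).
  - apply Rmult_le_compat_l; [|lra]. rewrite Hfmdef. unfold Rdiv.
    apply Rmult_le_pos; [|left; apply Rinv_0_lt_compat; lra].
    assert (0 < r0 ^ 2) by (apply pow_lt; lra).
    repeat apply Rmult_le_pos; lra.
  - rewrite Hfmdef. replace (2 * r0 ^ 2 * (- E) * D0 / (3 * D1 + a ^ 2) * (3 * D1 + a ^ 2))
      with (2 * r0 ^ 2 * (- E) * D0) by (field; nz).
    apply Rle_trans with (2 * (rho * (- E)) * D); [|exact Hf].
    assert (0 < r0 ^ 2) by (apply pow_lt; lra).
    assert (r0 ^ 2 * (- E) <= rho * (- E)) by nra.
    assert (0 <= r0 ^ 2 * (- E)) by nra. nra. }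
assert (HFG : F = G + E * (r ^ 2 - r_plus M a ^ 2)).
{ subst F G E r. unfold Fk, Gk. ring. }
assert (Hbr := bracket M a r HM ltac:(lra)). rewrite <- HeqD in Hbr.
assert (HGD : 0 <= G * (2 * r - 2 * M)) by nra.
assert (Hnum : D * (4 * r * E * F - P * (2 * r - 2 * M)) >= (- F) * (G * (2 * r - 2 * M))).
{ assert (E1 : D * (4 * r * E * F - P * (2 * r - 2 * M)) =
     F * (E * (4 * r * D - (r ^ 2 - r_plus M a ^ 2) * (2 * r - 2 * M)) - G * (2 * r - 2 * M))
     + (F ^ 2 - D * P) * (2 * r - 2 * M)) by (rewrite HFG; ring).
  rewrite E1.
  assert (0 <= (F ^ 2 - D * P) * (2 * r - 2 * M)) by nra.
  assert (E * (4 * r * D - (r ^ 2 - r_plus M a ^ 2) * (2 * r - 2 * M)) <= 0) by nra.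
  nra. }
assert (Hfm0 : 0 <= fm).
{ rewrite Hfmdef; unfold Rdiv. apply Rmult_le_pos; [|left; apply Rinv_0_lt_compat; lra].
  assert (0 < r0 ^ 2) by (apply pow_lt; lra). repeat apply Rmult_le_pos; lra. }
assert (Hnum2 : fm * G * (2 * (r0 - M)) <= D * (4 * r * E * F - P * (2 * r - 2 * M))).
{ assert (fm * G * (2 * (r0 - M)) <= (- F) * (G * (2 * r - 2 * M))).
  { replace (fm * G * (2 * (r0 - M))) with (fm * (G * (2 * (r0 - M)))) by ring.
    apply Rmult_le_compat; try lra; nra. }
  lra. }
assert (Hnum3 : fm * G * (2 * (r0 - M)) / D1 <= 4 * r * E * F - P * (2 * r - 2 * M)).
{ apply Rle_trans with (fm * G * (2 * (r0 - M)) / D).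
  - unfold Rdiv. apply Rmult_le_compat_l; [|apply Rinv_le_contravar; lra].
    apply Rmult_le_pos; [|lra]. apply Rmult_le_pos; lra.
  - apply (Rmult_le_reg_l D); [lra|].
    replace (D * (fm * G * (2 * (r0 - M)) / D)) with (fm * G * (2 * (r0 - M))) by (field; lra).
    exact Hnum2. }
unfold uder. rewrite <- HeqF, <- HeqE, <- Heqrho, <- HeqP, <- Heqr.
replace (fm * G * (2 * (r0 - M)) / (D1 * (R0 ^ 2 + a ^ 2)))
  with ((fm * G * (2 * (r0 - M)) / D1) / (R0 ^ 2 + a ^ 2)) by (field; nz).
apply div_bound_pos.
- split; [lra|]. nra.
- unfold Rdiv. apply Rmult_le_pos; [|left; apply Rinv_0_lt_compat; lra].
  apply Rmult_le_pos; [|lra]. apply Rmult_le_pos; lra.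
- exact Hnum3.
Qed.

Lemma dmult (f g : R -> R) x df dg : is_derive f x df -> is_derive g x dg ->
  is_derive (fun t => f t * g t) x (df * g x + f x * dg).
Proof. intros H1 H2. apply (is_derive_mult f g x df dg H1 H2). intros; apply Rmult_comm. Qed.

Lemma dplus (f g : R -> R) x df dg : is_derive f x df -> is_derive g x dg ->
  is_derive (fun t => f t + g t) x (df + dg).
Proof. intros H1 H2. apply (is_derive_plus f g x df dg H1 H2). Qed.

Lemma dminus (f g : R -> R) x df dg : is_derive f x df -> is_derive g x dg ->
  is_derive (fun t => f t - g t) x (df - dg).
Proof. intros H1 H2. apply (is_derive_minus f g x df dg H1 H2). Qed.

Lemma dopp (f : R -> R) x df : is_derive f x df -> is_derive (fun t => - f t) x (- df).
Proof. intros H1. apply (is_derive_opp f x df H1). Qed.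

Lemma dreflect (f : R -> R) x df : is_derive f (- x) df -> is_derive (fun t => f (- t)) x (- df).
Proof.
intros H. assert (Hn : is_derive (fun t : R => - t) x (-1)).
{ auto_derive; auto; ring. }
generalize (is_derive_comp f (fun t => - t) x df (-1) H Hn). simpl.
intro H2. eapply is_derive_ext; [intro t; reflexivity|].
replace (- df) with (scal (-1) df). exact H2. unfold scal; simpl; unfold mult; simpl; ring.
Qed.

Lemma deriv_cont (f : R -> R) x df : is_derive f x df -> continuity_pt f x.
Proof.
intro H. apply derivable_continuous_pt. exists df. apply is_derive_Reals. exact H.
Qed.

Lemma mvt_lb (f df : R -> R) x y c : x <= y ->
  (forall t, x <= t <= y -> is_derive f t (df t)) ->
  (forall t, x <= t <= y -> c <= df t) -> f x + c * (y - x) <= f y.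
Proof.
intros Hxy Hd Hc.
destruct (MVT_gen f x y df) as [t [Ht Heq]].
- intros t Ht. apply Hd. unfold Rmin, Rmax in Ht. destruct (Rle_dec x y); lra.
- intros t Ht. apply (deriv_cont f t (df t)). apply Hd. unfold Rmin, Rmax in Ht. destruct (Rle_dec x y); lra.
- unfold Rmin, Rmax in Ht. destruct (Rle_dec x y) as [_|n]; [|lra].
  assert (c <= df t) by (apply Hc; lra). nra.
Qed.

Lemma escape (x y dx dy : R -> R) c km B : 0 < c -> 0 < km ->
  (forall t, 0 <= t -> is_derive y t (dy t) /\ c <= dy t /\ is_derive x t (dx t)
      /\ (1 <= y t -> km <= dx t)) ->
  (forall t, 0 <= t -> x t <= B) -> False.
Proof.
intros Hc Hkm Hd HB.
set (T := Rmax 0 ((1 - y 0) / c)).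
assert (HT0 : 0 <= T) by apply Rmax_l.
assert (HT1 : (1 - y 0) / c <= T) by apply Rmax_r.
assert (Hy : forall t, T <= t -> 1 <= y t).
{ intros t Ht. assert (H := mvt_lb y dy 0 t c ltac:(lra)
     ltac:(intros s Hs; apply Hd; lra) ltac:(intros s Hs; apply Hd; lra)).
  assert ((1 - y 0) <= c * t).
  { apply (Rmult_le_reg_r (/ c)); [apply Rinv_0_lt_compat; lra|].
    replace (c * t * / c) with t by (field; lra). unfold Rdiv in HT1. lra. }
  lra. }
set (L := Rmax 0 ((B - x T + 1) / km)).
assert (HL0 : 0 <= L) by apply Rmax_l.
assert (HL1 : (B - x T + 1) / km <= L) by apply Rmax_r.
assert (H := mvt_lb x dx T (T + L) km ltac:(lra)
   ltac:(intros s Hs; apply Hd; lra) ltac:(intros s Hs; apply Hd; [lra | apply Hy; lra])).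
assert (B - x T + 1 <= km * L).
{ apply (Rmult_le_reg_r (/ km)); [apply Rinv_0_lt_compat; lra|].
  replace (km * L * / km) with L by (field; lra). unfold Rdiv in HL1. lra. }
assert (x (T + L) <= B) by (apply HB; lra).
replace (T + L - T) with L in H by ring. lra.
Qed.

Lemma dconst (c x : R) : is_derive (fun _ => c) x 0.
Proof. auto_derive; auto. Qed.

Lemma dDelta M a (f : R -> R) x df : is_derive f x df ->
  is_derive (fun t => Delta M a (f t)) x ((2 * f x - 2 * M) * df).
Proof.
intro H.
assert (H1 : is_derive (fun r => r * r - 2 * M * r + a * a) (f x) (2 * f x - 2 * M))
  by (auto_derive; auto; ring).
generalize (is_derive_comp (fun r => r * r - 2 * M * r + a * a) f x _ _ H1 H).
intro H2. unfold Delta. eapply is_derive_ext; [intro t; reflexivity|].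
replace ((2 * f x - 2 * M) * df) with (scal df (2 * f x - 2 * M)). exact H2.
unfold scal; simpl; unfold mult; simpl; ring.
Qed.

Lemma dscale (f : R -> R) k x df : is_derive f (k * x) df ->
  is_derive (fun t => f (k * t)) x (k * df).
Proof.
intro H. assert (Hn : is_derive (fun t : R => k * t) x k) by (auto_derive; auto; ring).
generalize (is_derive_comp f (fun t => k * t) x df k H Hn). intro H2.
replace (k * df) with (scal k df). exact H2. unfold scal; simpl; unfold mult; simpl; ring.
Qed.

Section Curve.
Variables (M a : R) (lo hi : Rbar) (g : R -> nat -> R).
Hypothesis HM : 0 < Rabs a < M.
Hypothesis Hb : bichar M a lo hi g.

Lemma cpt s : in_dom lo hi s -> in_char_set M a (g s) /\
  forall i, (i < 10)%nat -> is_derive (fun t => g t i) s (Hp M a (g s) i).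
Proof. intro Hs. destruct Hb as [_ H]. apply H; exact Hs. Qed.

Lemma cgood s : in_dom lo hi s -> goodpt M a (g s).
Proof. intro Hs. destruct (cpt s Hs) as [Hc _].
destruct (char_facts M a (g s) HM Hc) as (_&_&_&_&_&_&_&_&H&_). exact H. Qed.

Lemma curve_r s : in_dom lo hi s ->
  is_derive (fun t => g t 1%nat) s (2 * Delta M a (g s 1%nat) * g s 6%nat / rho2 a (g s)).
Proof.
intro Hs. destruct (cpt s Hs) as [_ Hd].
rewrite <- (d6 M a (g s) (cgood s Hs)). apply (Hd 1%nat). lia.
Qed.

Lemma curve_xr s : in_dom lo hi s ->
  is_derive (fun t => g t 6%nat) s (- dpart (p_kerr M a) 1 (g s)).
Proof. intro Hs. destruct (cpt s Hs) as [_ Hd]. apply (Hd 6%nat). lia. Qed.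

Lemma curve_u s : in_dom lo hi s ->
  is_derive (fun t => Delta M a (g t 1%nat) * g t 6%nat) s (uder M a (g s)).
Proof.
intro Hs.
assert (H := dmult _ _ s _ _ (dDelta M a _ s _ (curve_r s Hs)) (curve_xr s Hs)).
eapply is_derive_ext; [intro t; reflexivity|].
replace (uder M a (g s)) with
  ((2 * g s 1%nat - 2 * M) * (2 * Delta M a (g s 1%nat) * g s 6%nat / rho2 a (g s)) * g s 6%nat +
   Delta M a (g s 1%nat) * - dpart (p_kerr M a) 1 (g s)).
{ exact H. }
destruct (cpt s Hs) as [Hc _].
destruct (char_facts M a (g s) HM Hc) as
  (HrM & HD & Hw & Hcos & Hrho & Hr1 & Hr2 & Hrp & Hgood & HNk & HPth & HF2).
rewrite (d1 M a (g s) Hgood). rewrite HNk. unfold uder.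
rewrite HF2. field. split; apply Rgt_not_eq; lra.
Qed.

Lemma curve_E s : in_dom lo hi s -> is_derive (fun t => g t 5%nat) s 0.
Proof.
intro Hs. destruct (cpt s Hs) as [_ Hd].
replace 0 with (Hp M a (g s) 5). apply (Hd 5%nat). lia.
change (Hp M a (g s) 5) with (- dpart (p_kerr M a) 0 (g s)). rewrite d0. ring.
Qed.

Lemma curve_L s : in_dom lo hi s -> is_derive (fun t => Lz (g t)) s 0.
Proof.
intro Hs. destruct (cpt s Hs) as [_ Hd].
assert (H := dminus _ _ s _ _ (dmult _ _ s _ _ (Hd 2%nat ltac:(lia)) (Hd 8%nat ltac:(lia)))
                              (dmult _ _ s _ _ (Hd 3%nat ltac:(lia)) (Hd 7%nat ltac:(lia)))).
unfold Lz. eapply is_derive_ext; [intro t; reflexivity|].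
replace 0 with (Hp M a (g s) 2 * g s 8%nat + g s 2%nat * Hp M a (g s) 8 -
      (Hp M a (g s) 3 * g s 7%nat + g s 3%nat * Hp M a (g s) 7)). exact H.
change (Hp M a (g s) 2) with (dpart (p_kerr M a) 7 (g s)).
change (Hp M a (g s) 8) with (- dpart (p_kerr M a) 3 (g s)).
change (Hp M a (g s) 3) with (dpart (p_kerr M a) 8 (g s)).
change (Hp M a (g s) 7) with (- dpart (p_kerr M a) 2 (g s)).
generalize (dLz M a (g s) (cgood s Hs)). intro H0. lra.
Qed.

Lemma curve_F s : in_dom lo hi s -> continuity_pt (fun t => Fk a (g t)) s.
Proof.
intro Hs. destruct (cpt s Hs) as [_ Hd].
eapply deriv_cont.
eapply is_derive_ext.
{ intro t. symmetry. instantiate (1 := fun t => (g t 1%nat * g t 1%nat + a * a) * g t 5%nat + a * Lz (g t)).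
  unfold Fk. simpl. ring. }
apply (dplus (fun t => (g t 1%nat * g t 1%nat + a * a) * g t 5%nat) (fun t => a * Lz (g t))).
- apply (dmult (fun t => g t 1%nat * g t 1%nat + a * a) (fun t => g t 5%nat)); [|apply (Hd 5%nat); lia].
  apply (dplus (fun t => g t 1%nat * g t 1%nat) (fun t => a * a)).
  + apply (dmult (fun t => g t 1%nat) (fun t => g t 1%nat)); apply (Hd 1%nat); lia.
  + exact (dconst _ _).
- apply (dmult (fun t => a) (fun t => Lz (g t))); [exact (dconst _ _) | apply curve_L; exact Hs].
Qed.

End Curve.

Lemma in_dom_between lo hi x y t : in_dom lo hi x -> in_dom lo hi y -> x <= t <= y -> in_dom lo hi t.
Proof.
intros [Hx1 Hx2] [Hy1 Hy2] [H1 H2]. split.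
- eapply Rbar_lt_le_trans; [exact Hx1|]. simpl. exact H1.
- eapply Rbar_le_lt_trans; [|exact Hy2]. simpl. exact H2.
Qed.

Lemma dom_const lo hi (f : R -> R) x y :
  (forall t, in_dom lo hi t -> is_derive f t 0) -> in_dom lo hi x -> in_dom lo hi y -> f x = f y.
Proof.
intros Hd Hx Hy.
assert (K : forall u v, in_dom lo hi u -> in_dom lo hi v -> u <= v -> f u = f v).
{ intros u v Hu Hv Huv.
  assert (H1 := mvt_lb f (fun _ => 0) u v 0 Huv
     ltac:(intros t Ht; apply Hd; exact (in_dom_between lo hi u v t Hu Hv Ht)) ltac:(intros; lra)).
  assert (H2 := mvt_lb (fun t => - f t) (fun _ => - 0) u v 0 Huv
     ltac:(intros t Ht; apply dopp; apply Hd; exact (in_dom_between lo hi u v t Hu Hv Ht)) ltac:(intros; lra)).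
  simpl in *. lra. }
destruct (Rle_or_lt x y); [apply K; auto; lra | symmetry; apply K; auto; lra].
Qed.

Lemma dom_sign lo hi (f : R -> R) x y :
  (forall t, in_dom lo hi t -> continuity_pt f t) -> (forall t, in_dom lo hi t -> f t <> 0) ->
  in_dom lo hi x -> in_dom lo hi y -> f x < 0 -> f y < 0.
Proof.
intros Hc Hn Hx Hy Hfx.
destruct (Rlt_or_le (f y) 0) as [h|h]; [exact h|exfalso].
assert (Hfy : 0 < f y) by (destruct h; [lra | exfalso; apply (Hn y Hy); auto]).
destruct (Rtotal_order x y) as [Hxy|[Hxy|Hxy]].
- destruct (Ranalysis5.IVT_interv f x y) as [t [Ht Hft]]; auto.
  + intros t Ht. apply Hc. exact (in_dom_between lo hi x y t Hx Hy Ht).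
  + apply (Hn t); [exact (in_dom_between lo hi x y t Hx Hy Ht) | exact Hft].
- subst; lra.
- destruct (Ranalysis5.IVT_interv (fun t => - f t) y x) as [t [Ht Hft]]; auto; try lra.
  + intros t Ht. apply continuity_pt_opp. apply Hc. exact (in_dom_between lo hi y x t Hy Hx Ht).
  + apply (Hn t); [exact (in_dom_between lo hi y x t Hy Hx Ht) | lra].
Qed.

Lemma dscal (f : R -> R) k x df : is_derive f x df -> is_derive (fun t => k * f t) x (k * df).
Proof.
intro H. assert (H2 := dmult (fun _ => k) f x 0 df (dconst k x) H).
replace (k * df) with (0 * f x + k * df) by ring. exact H2.
Qed.

Lemma escape_curve M a lo hi g r0 R0 dir sg c : 0 < Rabs a < M -> bichar M a lo hi g ->
  r_plus M a < r0 -> (dir = 1 \/ dir = -1) -> (sg = 1 \/ sg = -1) -> 0 < c ->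
  (forall t, 0 <= t -> in_dom lo hi (dir * t)) ->
  (forall t, 0 <= t -> r0 <= g (dir * t) 1%nat <= R0) ->
  (forall t, 0 <= t -> c <= sg * uder M a (g (dir * t))) -> False.
Proof.
intros HM Hb Hr0 Hdir Hsg Hc Hdom Hbd Hu.
destruct (sqd_facts M a HM) as (Hs & Hs2 & HsM & Hrp & Haa).
assert (HM0 : 0 < M) by (generalize (Rabs_pos a); lra).
assert (Hr00 : 0 < r0) by lra.
assert (Hdd : dir * dir = 1) by (destruct Hdir; subst; ring).
assert (Hss : sg * sg = 1) by (destruct Hsg; subst; ring).
apply (escape (fun t => sg * g (dir * t) 1%nat)
              (fun t => sg * dir * (Delta M a (g (dir * t) 1%nat) * g (dir * t) 6%nat))
              (fun t => sg * (dir * (2 * Delta M a (g (dir * t) 1%nat) * g (dir * t) 6%nat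
                                      / rho2 a (g (dir * t)))))
              (fun t => sg * dir * (dir * uder M a (g (dir * t))))
              c (2 / (R0 ^ 2 + a ^ 2)) R0).
- exact Hc.
- apply Rdiv_lt_0_compat; [lra|]. nra.
- intros t Ht. assert (Hd := Hdom t Ht).
  split; [|split; [|split]].
  + apply dscal. apply (dscale (fun s => Delta M a (g s 1%nat) * g s 6%nat)).
    apply (curve_u M a lo hi g HM Hb); auto.
  + replace (sg * dir * (dir * uder M a (g (dir * t)))) with (sg * uder M a (g (dir * t)))
      by (transitivity (sg * (dir * dir) * uder M a (g (dir * t))); [rewrite Hdd; ring | ring]).
    apply Hu; exact Ht.
  + apply dscal. apply (dscale (fun s => g s 1%nat)). apply (curve_r M a lo hi g HM Hb); auto.
  + intro Hy1.
    destruct (cpt M a lo hi g Hb (dir * t) Hd) as [Hch _].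
    destruct (char_facts M a _ HM Hch) as
      (HrM & HD & Hw & Hcos & Hrho & Hr1 & Hr2 & Hrp0 & Hgood & HNk & HPth & HF2).
    destruct (Hbd t Ht) as [Hb1 Hb2].
    set (Y := sg * dir * (Delta M a (g (dir * t) 1%nat) * g (dir * t) 6%nat)) in *.
    assert (E1 : sg * (dir * (2 * Delta M a (g (dir * t) 1%nat) * g (dir * t) 6%nat
                                      / rho2 a (g (dir * t)))) = 2 * Y / rho2 a (g (dir * t)))
      by (unfold Y; field; lra).
    rewrite E1. clearbody Y.
    assert (Hrr : rho2 a (g (dir * t)) <= R0 ^ 2 + a ^ 2) by nra.
    apply Rle_trans with (2 / rho2 a (g (dir * t))).
    * unfold Rdiv. apply Rmult_le_compat_l; [lra|]. apply Rinv_le_contravar; lra.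
    * unfold Rdiv. rewrite Rmult_assoc. apply Rmult_le_compat_l; [lra|].
      rewrite <- (Rmult_1_l (/ rho2 a (g (dir * t)))) at 1.
      apply Rmult_le_compat_r; [left; apply Rinv_0_lt_compat; lra | lra].
- intros t Ht. destruct (Hbd t Ht) as [Hb1 Hb2]. simpl.
  destruct Hsg; subst sg; lra.
Qed.

Lemma no_trap M a lo hi g r0 R0 dir s0 : 0 < Rabs a < M -> bichar M a lo hi g ->
  r_plus M a < r0 -> (dir = 1 \/ dir = -1) ->
  (forall t, 0 <= t -> in_dom lo hi (dir * t)) ->
  (forall t, 0 <= t -> r0 <= g (dir * t) 1%nat <= R0) ->
  in_dom lo hi s0 -> Fk a (g s0) < 0 -> (0 < g s0 5%nat \/ 0 < Gk M a (g s0)) -> False.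
Proof.
intros HM Hb Hr0 Hdir Hdom Hbd Hs0 HF0 Hcase.
destruct (sqd_facts M a HM) as (Hs & Hs2 & HsM & Hrp & Haa).
assert (HM0 : 0 < M) by (generalize (Rabs_pos a); lra).
assert (Ha0 : a <> 0) by (intro h; rewrite h in Haa; lra).
assert (HE : forall s, in_dom lo hi s -> g s 5%nat = g s0 5%nat).
{ intros s Hs'. apply (dom_const lo hi (fun t => g t 5%nat)); auto.
  intros t Ht. apply (curve_E M a lo hi g Hb); auto. }
assert (HL : forall s, in_dom lo hi s -> Lz (g s) = Lz (g s0)).
{ intros s Hs'. apply (dom_const lo hi (fun t => Lz (g t))); auto.
  intros t Ht. apply (curve_L M a lo hi g HM Hb); auto. }
assert (HG : forall s, in_dom lo hi s -> Gk M a (g s) = Gk M a (g s0)).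
{ intros s Hs'. unfold Gk. rewrite (HE s Hs'), (HL s Hs'). reflexivity. }
assert (HF : forall s, in_dom lo hi s -> Fk a (g s) < 0).
{ intros s Hs'. apply (dom_sign lo hi (fun t => Fk a (g t)) s0 s); auto.
  - intros t Ht. apply (curve_F M a lo hi g HM Hb); auto.
  - intros t Ht. destruct (cpt M a lo hi g Hb t Ht) as [Hc _]. apply (F_ne0 M a); auto. }
assert (Hb0 := Hbd 0 ltac:(lra)).
assert (HR0 : r0 <= R0) by lra.
destruct (Delta_pos M a r0 HM Hr0) as [HrM HD0].
destruct (Delta_pos M a R0 HM ltac:(lra)) as [_ HD1].
set (E0 := g s0 5%nat) in *. set (G0 := Gk M a (g s0)) in *.
destruct (Rlt_or_le 0 E0) as [HEp | HEn].
-
  apply (escape_curve M a lo hi g r0 R0 dir (-1)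
           (r0 ^ 4 * E0 ^ 2 * (2 * (r0 - M)) / (a ^ 2 * (R0 ^ 2 + a ^ 2))) HM Hb Hr0 Hdir
           ltac:(right; reflexivity)); auto.
  + apply Rdiv_lt_0_compat.
    * assert (0 < r0 ^ 4) by (apply pow_lt; lra). assert (0 < E0 ^ 2) by (apply pow_lt; lra).
      repeat apply Rmult_lt_0_compat; lra.
    * assert (0 < a ^ 2) by nra. nra.
  + intros t Ht. assert (Hd := Hdom t Ht).
    destruct (cpt M a lo hi g Hb _ Hd) as [Hc _].
    assert (H := caseA_pt M a (g (dir * t)) r0 R0 HM Hc Hr0 (Hbd t Ht)
                   ltac:(rewrite (HE _ Hd); exact HEp) (HF _ Hd)).
    rewrite (HE _ Hd) in H. fold E0 in H. lra.
-
  destruct Hcase as [Hc0 | HGp]; [lra|].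
  destruct (cpt M a lo hi g Hb s0 Hs0) as [Hch0 _].
  assert (Hr1 : r_plus M a < g s0 1%nat) by (destruct Hch0; lra).
  assert (HEn' : E0 < 0).
  { assert (HFG : Fk a (g s0) = G0 + E0 * (g s0 1%nat ^ 2 - r_plus M a ^ 2))
      by (unfold G0, E0, Fk, Gk; ring).
    assert (0 < g s0 1%nat ^ 2 - r_plus M a ^ 2) by nra.
    destruct HEn as [HEn|HEn]; [exact HEn|]. rewrite HEn in HFG. lra. }
  apply (escape_curve M a lo hi g r0 R0 dir 1
           ((2 * r0 ^ 2 * (- E0) * Delta M a r0 / (3 * Delta M a R0 + a ^ 2)) * G0
             * (2 * (r0 - M)) / (Delta M a R0 * (R0 ^ 2 + a ^ 2))) HM Hb Hr0 Hdir
           ltac:(left; reflexivity)); auto.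
  + assert (0 < a ^ 2) by nra.
    apply Rdiv_lt_0_compat; [|nra].
    apply Rmult_lt_0_compat; [|lra]. apply Rmult_lt_0_compat; [|lra].
    apply Rdiv_lt_0_compat; [|lra].
    assert (0 < r0 ^ 2) by (apply pow_lt; lra). repeat apply Rmult_lt_0_compat; lra.
  + intros t Ht. assert (Hd := Hdom t Ht).
    destruct (cpt M a lo hi g Hb _ Hd) as [Hc _].
    assert (H := caseB_pt M a (g (dir * t)) r0 R0 HM Hc Hr0 (Hbd t Ht)
                   ltac:(rewrite (HE _ Hd); exact HEn') (HF _ Hd)
                   ltac:(rewrite (HG _ Hd); exact HGp)).
    rewrite (HE _ Hd), (HG _ Hd) in H. fold E0 G0 in H. lra.
Qed.

Lemma transfer M a z z' : (forall i, (i < 10)%nat -> z' i = z i) -> in_char_set M a z' ->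
  in_char_set M a z /\ Fk a z' = Fk a z /\ z' 5%nat = z 5%nat /\ Gk M a z' = Gk M a z.
Proof.
intros H Hc.
assert (E1 := H 1%nat ltac:(lia)). assert (E2 := H 2%nat ltac:(lia)).
assert (E3 := H 3%nat ltac:(lia)). assert (E4 := H 4%nat ltac:(lia)).
assert (E5 := H 5%nat ltac:(lia)). assert (E6 := H 6%nat ltac:(lia)).
assert (E7 := H 7%nat ltac:(lia)). assert (E8 := H 8%nat ltac:(lia)).
assert (E9 := H 9%nat ltac:(lia)).
unfold Fk, Gk, in_char_set, p_kerr, rho2, cos2, wnorm2, Lx, Ly, Lz, Delta in *.
rewrite ?E1, ?E2, ?E3, ?E4, ?E5, ?E6, ?E7, ?E8, ?E9 in Hc.
rewrite ?E1, ?E2, ?E3, ?E4, ?E5, ?E6, ?E7, ?E8, ?E9.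
split; [exact Hc | repeat split; reflexivity].
Qed.

Theorem proposition6p6 (M a : R) (z : nat -> R) :
  0 < Rabs a < M ->
  Gamma_plus M a z \/ Gamma_minus M a z ->
  0 < xi_dt z \/ 0 < xi_vH M a z ->
  future_pointing M a z.
Proof.
intros HM Hgam Hsign.
assert (Hrp2 : 0 < r_plus M a ^ 2 + a ^ 2).
{ destruct (sqd_facts M a HM) as (Hs & Hs2 & HsM & Hrp & Haa).
  assert (HM0 : 0 < M) by (generalize (Rabs_pos a); lra). nra. }
assert (Key : forall lo hi g dir r0, bichar M a lo hi g -> r_plus M a < r0 ->
   (dir = 1 \/ dir = -1) ->
   (forall t, 0 <= t -> in_dom lo hi (dir * t)) ->
   (exists R0, forall t, 0 <= t -> r0 <= g (dir * t) 1%nat <= R0) ->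
   on_curve lo hi g z -> future_pointing M a z).
{ intros lo hi g dir r0 Hb Hr0 Hdir Hdom [R0 Hbd] [s0 [Hs0 Heq]].
  destruct (cpt M a lo hi g Hb s0 Hs0) as [Hch _].
  destruct (transfer M a z (g s0) Heq Hch) as (Hcz & HFz & HEz & HGz).
  destruct (Rtotal_order 0 (Fk a z)) as [Hp | [Hz | Hn]].
  - apply fp_point; auto.
  - exfalso. apply (F_ne0 M a z HM Hcz). auto.
  - exfalso. apply (no_trap M a lo hi g r0 R0 dir s0 HM Hb Hr0 Hdir Hdom Hbd Hs0).
    + rewrite HFz; exact Hn.
    + rewrite HEz, HGz. destruct Hsign as [H1 | H1]; [left; exact H1 | right].
      unfold xi_vH, Omega_H, xi_phi in H1. unfold Gk.
      replace ((r_plus M a ^ 2 + a ^ 2) * z 5%nat + a * Lz z) with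
        ((r_plus M a ^ 2 + a ^ 2) * (z 5%nat + a / (r_plus M a ^ 2 + a ^ 2) * Lz z))
        by (field; lra).
      apply Rmult_lt_0_compat; lra. }
destruct Hgam as [[lo [hi [g [[Hb _] [[Hhi [Hlo [r0 [R0 [Hr0 [_ Hbd]]]]]] Hon]]]]]
                 | [lo [hi [g [[Hb _] [[Hlo [Hhi [r0 [R0 [Hr0 [_ Hbd]]]]]] Hon]]]]]].
- apply (Key lo hi g (-1) r0 Hb Hr0 ltac:(right; reflexivity)); auto.
  + intros t Ht. subst lo. split; [exact I|].
    eapply Rbar_le_lt_trans; [|exact Hhi]. simpl. lra.
  + exists R0. intros t Ht. apply Hbd. lra.
- apply (Key lo hi g 1 r0 Hb Hr0 ltac:(left; reflexivity)); auto.
  + intros t Ht. subst hi. split; [|exact I].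
    eapply Rbar_lt_le_trans; [exact Hlo|]. simpl. lra.
  + exists R0. intros t Ht. apply Hbd. lra.
Qed.
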